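(* Let $X$ be a real Banach space, $Y$ a closed subspace of $X$, $(\Omega,\Sigma,\mu)$ a complete probability space, $1\leq p<\infty$ and $n$ a positive integer. Let $f_1,\ldots,f_n\in L_p(\mu,X)$ and let $g:\Omega\to Y$ be a $\mu$-measurable function such that for almost all $s\in\Omega$, $g(s)$ is a relative $p$-center of $\{f_1(s),\ldots,f_n(s)\}$ in $Y$. Then $g\in L_p(\mu,Y)$ and $g$ is a relative $p$-center of $\{f_1,\ldots,f_n\}\subset L_p(\mu,X)$ in $L_p(\mu,Y)$, i.e. $\sum_{i=1}^n\|f_i-g\|_p^p\leq\sum_{i=1}^n\|f_i-h\|_p^p$ for all $h\in L_p(\mu,Y)$.
   Context: A function $\Omega\to X$ is $\mu$-measurable (strongly measurable) if it is the $\mu$-a.e. limit of a sequence of $\Sigma$-simple functions. $L_p(\mu,X)$ denotes the Banach space of Bochner $p$-integrable functions $\Omega\to X$ with norm $\|f\|_p=(\int_\Omega\|f(s)\|^p\,d\mu(s))^{1/p}$, and $L_p(\mu,Y)$ the subspace of those with values in $Y$. For a subset $Y$ of a normed space $X$, a finite set $\{a_1,\ldots,a_n\}\subset X$ and $m\in[1,\infty)$, a point $y_0\in Y$ is a relative $m$-center of $\{a_1,\ldots,a_n\}$ in $Y$ if $\sum_{i=1}^n\|a_i-y_0\|^m\leq\sum_{i=1}^n\|a_i-y\|^m$ for all $y\in Y$. *)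

(* Defs.v *)
From HB Require Import structures.
From mathcomp Require Import all_boot all_order all_algebra.
From mathcomp Require Import all_classical all_reals all_analysis.
Set Implicit Arguments. Unset Strict Implicit. Unset Printing Implicit Defensive.
Import Order.TTheory GRing.Theory Num.Theory.
Import numFieldNormedType.Exports.
Local Open Scope classical_set_scope.
Local Open Scope ring_scope.

Section Defs.
Context {R : realType} {d : measure_display} {T : measurableType d}
        {X : normedModType R}.

Definition is_linear_subspace (Y : set X) : Prop :=
  Y 0 /\ (forall x y, Y x -> Y y -> Y (x + y)) /\
  (forall (a : R) x, Y x -> Y (a *: x)).

Definition sigma_simple (f : T -> X) : Prop :=
  finite_set (range f) /\ (forall x : X, measurable (f @^-1` [set x])).

(* mu-measurable (strongly measurable): mu-a.e. limit of Sigma-simple functions *)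
Definition strongly_measurable (mu : {measure set T -> \bar R}) (f : T -> X) : Prop :=
  exists u : nat -> T -> X, (forall k, sigma_simple (u k)) /\
    {ae mu, forall s, (fun k => u k s) @ \oo --> f s}.

Definition Lp_norm_pow (mu : {measure set T -> \bar R}) (p : R) (f : T -> X) : \bar R :=
  (\int[mu]_s ((`|f s| `^ p)%:E))%E.

Definition in_Lp (mu : {measure set T -> \bar R}) (p : R) (f : T -> X) : Prop :=
  strongly_measurable mu f /\ (Lp_norm_pow mu p f < +oo)%E.

Definition in_LpY (mu : {measure set T -> \bar R}) (p : R) (Y : set X) (f : T -> X) : Prop :=
  in_Lp mu p f /\ (forall s, Y (f s)).

Definition relative_center (Y : set X) (n : nat) (a : 'I_n -> X) (m : R) (y0 : X) : Prop :=
  Y y0 /\ forall y, Y y ->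
    \sum_(i < n) `|a i - y0| `^ m <= \sum_(i < n) `|a i - y| `^ m.

End Defs.

(* Main.v *)
Require Import Defs.
From HB Require Import structures.
From mathcomp Require Import all_boot all_order all_algebra.
From mathcomp Require Import all_classical all_reals all_analysis.
From mathcomp Require Import lra.
From mathcomp Require Import measurable_realfun.
Import Order.TTheory GRing.Theory Num.Theory.
Import numFieldNormedType.Exports.
Local Open Scope classical_set_scope.
Local Open Scope ring_scope.

Section Aux.
Context {R : realType} {d : measure_display} {T : measurableType d}
        {X : normedModType R}.
Variable mu : {measure set T -> \bar R}.
Hypothesis cmu : measure_is_complete mu.

Lemma simple_meas (u v : T -> X) : sigma_simple u -> sigma_simple v ->
  measurable_fun setT (fun s => `|u s - v s|).
Proof.
move=> [fu mu'] [fv mv] _ B mB; rewrite setTI.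
have -> : (fun s => `|u s - v s|) @^-1` B =
  \bigcup_(a in range u) \bigcup_(b in range v)
    (if pselect (B `|a - b|) then u @^-1` [set a] `&` v @^-1` [set b] else set0).
  apply/seteqP; split => [s /= Bs|s [a [s1 _ <-] [b [s2 _ <-]]]].
  - exists (u s); first by exists s.
    exists (v s); first by exists s.
    by case: pselect.
  - case: pselect => // Bab [/= e1 e2]; by rewrite /= e1 e2.
apply: fin_bigcup_measurable => // a _; apply: fin_bigcup_measurable => // b _.
by destruct (pselect (B `|a - b|)); [exact: measurableI|exact: measurable0].
Qed.

Lemma sm_meas (f g : T -> X) : strongly_measurable mu f -> strongly_measurable mu g ->
  measurable_fun setT (fun s => `|f s - g s|).
Proof.
move=> [u [su au]] [v [sv av]].
have [N [mN N0 sN]] : mu.-negligible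
   (~` [set s | (fun k => u k s) @ \oo --> f s /\ (fun k => v k s) @ \oo --> g s]).
  apply: negligibleS (negligibleU au av) => s /= /not_andP [] ?; [left|right] => //.
rewrite -(setUv N); apply/measurable_funU => //; first exact: measurableC.
split.
  move=> _ B mB; apply: cmu; exists N; split => //; exact: subIsetl.
apply: (@measurable_realfun.measurable_fun_cvg _ _ _ _ (fun k s => `|u k s - v k s|)) => [k|s Ns].
  by apply: measurable_funS (simple_meas _ _ (su k) (sv k)).
have [cu cv] : (fun k => u k s) @ \oo --> f s /\ (fun k => v k s) @ \oo --> g s.
  by apply: contrapT => H; apply: Ns; apply: sN.
apply: cvg_norm; exact: cvgB.
Qed.

Lemma sm0 : strongly_measurable mu (fun _ => (0 : X)).
Proof.
exists (fun _ _ => 0); split; last by apply: aeW => s; exact: cvg_cst.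
move=> k; split.
  apply: sub_finite_set (finite_set1 (0:X)) => _ [s _ <-] //.
move=> x; have -> : (fun _ : T => (0:X)) @^-1` [set x] = @cst T X 0 @^-1` [set x] by [].
by rewrite preimage_cst; case: ifP.
Qed.


Lemma powR_add_le (a b p : R) : 0 <= a -> 0 <= b -> 0 <= p ->
  (a + b) `^ p <= 2 `^ p * (a `^ p + b `^ p).
Proof.
move=> a0 b0 p0.
have [ab|ba] := leP a b.
  apply: (@le_trans _ _ ((2 * b) `^ p)).
    by apply: ge0_ler_powR => //; rewrite ?nnegrE; [lra|lra|lra].
  rewrite powRM //.
  by rewrite ler_wpM2l ?powR_ge0 // lerDr powR_ge0.
apply: (@le_trans _ _ ((2 * a) `^ p)).
  by apply: ge0_ler_powR => //; rewrite ?nnegrE; [lra|lra|lra].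
rewrite powRM //.
by rewrite ler_wpM2l ?powR_ge0 // lerDl powR_ge0.
Qed.

End Aux.

Theorem mainTheorem4 (R : realType) (X : completeNormedModType R) (Y : set X)
  (d : measure_display) (T : measurableType d) (mu : probability T R)
  (p : R) (n : nat) (f : 'I_n -> T -> X) (g : T -> X) :
  closed Y -> is_linear_subspace Y ->
  measure_is_complete mu ->
  1 <= p -> (0 < n)%N ->
  (forall i, in_Lp mu p (f i)) ->
  strongly_measurable mu g -> (forall s, Y (g s)) ->
  {ae mu, forall s, relative_center Y (fun i => f i s) p (g s)} ->
  in_LpY mu p Y g /\
  (forall h, in_LpY mu p Y h ->
     (\sum_(i < n) Lp_norm_pow mu p (fun s => (f i s - g s)%R)
        <= \sum_(i < n) Lp_norm_pow mu p (fun s => (f i s - h s)%R))%E).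
Proof.
move=> Ycl [Y0 [YD YZ]] cmu p1 n0 fLp gsm gY gc.
have p0 : 0 <= p by apply: le_trans p1.
have smf i : strongly_measurable mu (f i) := (fLp i).1.
have mR : forall phi psi : T -> X, strongly_measurable mu phi -> strongly_measurable mu psi ->
    measurable_fun setT (fun s => `|phi s - psi s| `^ p).
  move=> phi psi h1 h2.
  have H := sm_meas _ cmu _ _ h1 h2. have := measurableT_comp (measurable_realfun.measurable_powR p) H. exact.
have mS : forall phi : T -> X, strongly_measurable mu phi ->
    measurable_fun setT (EFin \o (fun s => (\sum_(i < n) `|f i s - phi s| `^ p))).
  move=> phi hphi; apply/measurable_EFinP.
  by apply: measurable_fun_approximation.measurable_sum => i; exact: mR.
have S0 : forall (phi : T -> X) s, (0 <= \sum_(i < n) `|f i s - phi s| `^ p).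
  by move=> phi s; apply: sumr_ge0 => i _; exact: powR_ge0.
have sumI : forall phi : T -> X, strongly_measurable mu phi ->
    (\sum_(i < n) Lp_norm_pow mu p (fun s => (f i s - phi s)%R) =
     \int[mu]_s (\sum_(i < n) `|f i s - phi s| `^ p)%:E)%E.
  move=> phi hphi; rewrite /Lp_norm_pow.
  rewrite -(@ge0_integral_sum _ _ _ mu setT measurableT _ (fun i s => (`|f i s - phi s| `^ p)%:E)).
  - by apply: eq_integral => s _; rewrite sumEFin.
  - by move=> i; apply/measurable_EFinP; exact: mR.
  - by move=> i s _; rewrite lee_fin powR_ge0.
split; last first.
  move=> h [[hsm _] hY].
  rewrite !sumI //; apply: ae_ge0_le_integral => //.
  - by move=> s _; rewrite lee_fin.
  - exact: mS.
  - by move=> s _; rewrite lee_fin.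
  - exact: mS.
  - by apply: filterS gc => s [_ H] _; rewrite lee_fin; exact: H _ (hY s).
split => //; split => //.
pose i0 : 'I_n := Ordinal n0.
pose c : R := 2 `^ p * 2.
have c0 : 0 <= c by rewrite /c mulr_ge0 ?powR_ge0.
have sm0' := @sm0 _ _ _ X mu.
rewrite /Lp_norm_pow.
apply: (@le_lt_trans _ _ (\int[mu]_s (c * \sum_(i < n) `|f i s - 0| `^ p)%:E)%E).
  apply: ae_ge0_le_integral => //.
  - have := mR g (fun _ => 0) gsm sm0'.
    rewrite (_ : (fun s => `|g s - 0| `^ p) = (fun s => `|g s| `^ p)); last by apply/funext => s; rewrite subr0.
    by move=> H; exact: (@measurableT_comp _ _ _ _ _ _ EFin _ (fun s => `|g s| `^ p)).
  - by move=> s _; rewrite lee_fin; exact: (mulr_ge0 c0 (S0 (fun _ => 0) s)).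
  - apply/measurable_EFinP; apply: measurable_funM; first exact: measurable_cst.
    by apply: measurable_fun_approximation.measurable_sum => i; exact: mR.
  apply: filterS gc => s [_ H] _; rewrite lee_fin.
  have H0 := H 0 Y0.
  have e : g s = (f i0 s - 0) - (f i0 s - g s).
    by rewrite subr0 opprB addrCA subrr addr0.
  have A1 : `|f i0 s - g s| `^ p <= \sum_(i < n) `|f i s - 0| `^ p.
    apply: le_trans H0.
    rewrite (bigD1 i0) //= lerDl; apply: sumr_ge0 => i _; exact: powR_ge0.
  have A2 : `|f i0 s - 0| `^ p <= \sum_(i < n) `|f i s - 0| `^ p.
    rewrite (bigD1 i0) //= lerDl; apply: sumr_ge0 => i _; exact: powR_ge0.
  apply: (@le_trans _ _ ((`|f i0 s - 0| + `|f i0 s - g s|) `^ p)).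
    apply: ge0_ler_powR => //; rewrite ?nnegrE ?addr_ge0 //.
    by rewrite {1}e ler_normB.
  apply: le_trans (powR_add_le _ _ _ (normr_ge0 _) (normr_ge0 _) p0) _.
  rewrite /c -mulrA ler_wpM2l ?powR_ge0 //; lra.
under eq_integral do rewrite EFinM.
rewrite ge0_integralZl_EFin //.
  - apply: lte_mul_pinfty => //.
    rewrite -sumI //; apply: lte_sum_pinfty => i _.
    have := (fLp i).2; rewrite /Lp_norm_pow.
    by move=> H; under eq_integral do rewrite subr0.
  - by move=> s _; rewrite lee_fin; exact: (S0 (fun _ => 0) s).
  - exact: (mS (fun _ => 0)).
Qed.
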